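(* Let $\mathbb{X},\mathbb{Y}$ be real normed linear spaces, $1\le p<\infty$, and $\mathbb{Z}=\mathbb{X}\oplus_p\mathbb{Y}$. Let $z_1=(x_1,y_1)$, $z_2=(x_2,y_2)\in\mathbb{Z}$ with $x_1,x_2\in\mathbb{X}\setminus\{0\}$ and $y_1,y_2\in\mathbb{Y}\setminus\{0\}$. (i) If $(z_1,z_2)$ is a parallel pair in $\mathbb{Z}$, then $(x_1,x_2)$ is a parallel pair in $\mathbb{X}$ and $(y_1,y_2)$ is a parallel pair in $\mathbb{Y}$. (ii) If $(z_1,z_2)$ is a TEA pair in $\mathbb{Z}$, then $(x_1,x_2)$ is a TEA pair in $\mathbb{X}$ and $(y_1,y_2)$ is a TEA pair in $\mathbb{Y}$.
   Context: For $1\le p<\infty$, $\mathbb{X}\oplus_p\mathbb{Y}$ is $\mathbb{X}\times\mathbb{Y}$ with norm $\|(x,y)\|=(\|x\|^p+\|y\|^p)^{1/p}$. $(x,y)$ is a parallel pair if $\|x+\lambda y\|=\|x\|+\|y\|$ for some scalar $\lambda$ with $|\lambda|=1$; $(x,y)$ is a TEA pair if $\|x+y\|=\|x\|+\|y\|$. *)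

(* Defs.v *)
From HB Require Import structures.
From mathcomp Require Import all_boot all_order all_algebra.
From mathcomp Require Import all_classical all_reals all_analysis.
Set Implicit Arguments. Unset Strict Implicit. Unset Printing Implicit Defensive.
Import Order.TTheory GRing.Theory Num.Theory.
Import numFieldNormedType.Exports.
Local Open Scope ring_scope.

Definition parallel_pair (R : realType) (V : normedModType R) (x y : V) : Prop :=
  exists lam : R, `|lam| = 1 /\ `|x + lam *: y| = `|x| + `|y|.

Definition TEA_pair (R : realType) (V : normedModType R) (x y : V) : Prop :=
  `|x + y| = `|x| + `|y|.

Definition psum_norm (R : realType) (X Y : normedModType R) (p : R)
  (z : X * Y) : R := (`|z.1| `^ p + `|z.2| `^ p) `^ p^-1.

Definition parallel_pair_p (R : realType) (X Y : normedModType R) (p : R)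
  (z w : X * Y) : Prop :=
  exists lam : R, `|lam| = 1 /\
    psum_norm p (z.1 + lam *: w.1, z.2 + lam *: w.2) = psum_norm p z + psum_norm p w.

Definition TEA_pair_p (R : realType) (X Y : normedModType R) (p : R)
  (z w : X * Y) : Prop :=
  psum_norm p (z.1 + w.1, z.2 + w.2) = psum_norm p z + psum_norm p w.

(* Main.v *)
Require Import Defs.
From HB Require Import structures.
From mathcomp Require Import all_boot all_order all_algebra.
From mathcomp Require Import all_classical all_reals all_analysis.
From mathcomp Require Import lra ring.
Import Order.TTheory GRing.Theory Num.Theory.
Import numFieldNormedType.Exports.
Local Open Scope ring_scope.

Section S.
Context {R : realType}.
Definition FF (p u v : R) := (u `^ p + v `^ p) `^ p^-1.

Lemma mink (p a1 a2 b1 b2 : R) : 1 <= p -> 0 <= a1 -> 0 <= a2 -> 0 <= b1 -> 0 <= b2 ->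
  FF p (a1 + a2) (b1 + b2) <= FF p a1 b1 + FF p a2 b2.
Proof.
move=> p1 a10 a20 b10 b20; rewrite /FF.
have p0 : 0 < p by rewrite (lt_le_trans _ p1).
have [->|pn1] := eqVneq p 1.
  rewrite invr1 !powRr1 ?addr_ge0 //; lra.
have {pn1} {}p1 : 1 < p by rewrite lt_neqAle eq_sym pn1.
pose q := p / (p - 1).
have pm0 : 0 < p - 1 by rewrite subr_gt0.
have q0 : 0 < q by rewrite divr_gt0.
have pq1 : p^-1 + q^-1 = 1.
  by rewrite /q invf_div -{1}(div1r p) -mulrDl subrKC mulfV// gt_eqF.
have pqe : (p - 1) * q = p by rewrite /q mulrCA mulfV ?mulr1 // gt_eqF.
set A := a1 + a2; set B := b1 + b2.
have A0 : 0 <= A by rewrite addr_ge0.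
have B0 : 0 <= B by rewrite addr_ge0.
set S := A `^ p + B `^ p.
have hA : (A `^ (p - 1)) `^ q = A `^ p by rewrite -powRrM pqe.
have hB : (B `^ (p - 1)) `^ q = B `^ p by rewrite -powRrM pqe.
have h1 := hoelder2 a10 b10 (powR_ge0 A (p - 1)) (powR_ge0 B (p - 1)) p0 q0 pq1.
have h2 := hoelder2 a20 b20 (powR_ge0 A (p - 1)) (powR_ge0 B (p - 1)) p0 q0 pq1.
rewrite hA hB -/S in h1 h2.
have hS : S <= ((a1 `^ p + b1 `^ p) `^ p^-1 + (a2 `^ p + b2 `^ p) `^ p^-1) * S `^ q^-1.
  have eS : S = (a1 * A `^ (p - 1) + b1 * B `^ (p - 1)) + (a2 * A `^ (p - 1) + b2 * B `^ (p - 1)).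
    rewrite /S -(mulr_powRB1 A0 p0) -(mulr_powRB1 B0 p0) {1}/A {1}/B.
    by rewrite (mulrDl a1 a2) (mulrDl b1 b2) addrACA.
  rewrite {1}eS.
  rewrite (mulrDl (_ `^ p^-1)). exact: (lerD h1 h2).
have S0 : 0 <= S by rewrite addr_ge0 ?powR_ge0.
have [S00|Spos] := eqVneq S 0.
  rewrite S00 powR0; first by apply: addr_ge0; apply: powR_ge0.
  by rewrite invr_eq0 gt_eqF.
have Sq : 0 < S `^ q^-1 by rewrite powR_gt0 // lt_neqAle eq_sym Spos.
rewrite -(ler_pM2r Sq) -powRD; last by rewrite Spos implybT.
by rewrite pq1 powRr1.
Qed.

Lemma FF_le (p u v A B : R) : 0 < p -> 0 <= u -> 0 <= v -> u <= A -> v <= B ->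
  FF p u v <= FF p A B.
Proof.
move=> p0 u0 v0 uA vB; rewrite /FF.
have A0 : 0 <= A by apply: le_trans uA.
have B0 : 0 <= B by apply: le_trans vB.
apply: ge0_ler_powR; first by rewrite invr_ge0 ltW.
- by rewrite nnegrE; apply: addr_ge0; apply: powR_ge0.
- by rewrite nnegrE; apply: addr_ge0; apply: powR_ge0.
apply: lerD; apply: ge0_ler_powR => //; exact: ltW.
Qed.

Lemma FF_lt (p u v A B : R) : 0 < p -> 0 <= u -> 0 <= v -> u <= A -> v <= B ->
  (u < A \/ v < B) -> FF p u v < FF p A B.
Proof.
move=> p0 u0 v0 uA vB h; rewrite /FF.
have A0 : 0 <= A by apply: le_trans uA.
have B0 : 0 <= B by apply: le_trans vB.
apply: gt0_ltr_powR; first by rewrite invr_gt0.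
- by rewrite nnegrE; apply: addr_ge0; apply: powR_ge0.
- by rewrite nnegrE; apply: addr_ge0; apply: powR_ge0.
case: h => h.
  apply: ltr_leD; first by apply: gt0_ltr_powR.
  by apply: ge0_ler_powR => //; exact: ltW.
apply: ler_ltD; last by apply: gt0_ltr_powR.
by apply: ge0_ler_powR => //; exact: ltW.
Qed.

Lemma key (p u v a1 a2 b1 b2 : R) : 1 <= p -> 0 <= u -> 0 <= v ->
  0 <= a1 -> 0 <= a2 -> 0 <= b1 -> 0 <= b2 ->
  u <= a1 + a2 -> v <= b1 + b2 -> FF p u v = FF p a1 b1 + FF p a2 b2 ->
  u = a1 + a2 /\ v = b1 + b2.
Proof.
move=> p1 u0 v0 a10 a20 b10 b20 uA vB E.
have p0 : 0 < p by rewrite (lt_le_trans _ p1).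
have M : FF p (a1 + a2) (b1 + b2) <= FF p a1 b1 + FF p a2 b2 by apply: mink.
have [uA'|] := ltP u (a1 + a2).
  have : FF p u v < FF p (a1 + a2) (b1 + b2) by apply: FF_lt => //; left.
  rewrite E => H.
  by move: (lt_le_trans H M); rewrite ltxx.
move=> Au; have eu : u = a1 + a2 by apply/eqP; rewrite eq_le uA Au.
have [vB'|] := ltP v (b1 + b2).
  have : FF p u v < FF p (a1 + a2) (b1 + b2) by apply: FF_lt => //; right.
  rewrite E => H.
  by move: (lt_le_trans H M); rewrite ltxx.
by move=> Bv; split => //; apply/eqP; rewrite eq_le vB Bv.
Qed.
End S.

Theorem mainTheorem4 (R : realType) (X Y : normedModType R) (p : R)
  (x1 x2 : X) (y1 y2 : Y) :
  1 <= p -> x1 != 0 -> x2 != 0 -> y1 != 0 -> y2 != 0 ->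
  (parallel_pair_p p (x1, y1) (x2, y2) ->
     parallel_pair x1 x2 /\ parallel_pair y1 y2) /\
  (TEA_pair_p p (x1, y1) (x2, y2) ->
     TEA_pair x1 x2 /\ TEA_pair y1 y2).
Proof.
move=> p1 _ _ _ _.
have gen : forall lam : R, `|lam| = 1 ->
   psum_norm p (x1 + lam *: x2, y1 + lam *: y2) = psum_norm p (x1, y1) + psum_norm p (x2, y2) ->
   `|x1 + lam *: x2| = `|x1| + `|x2| /\ `|y1 + lam *: y2| = `|y1| + `|y2|.
  move=> lam l1 E.
  apply: (@key R p) => //.
  - by rewrite (le_trans (ler_normD _ _)) // normrZ l1 mul1r.
  - by rewrite (le_trans (ler_normD _ _)) // normrZ l1 mul1r.
split.
  case=> lam [l1 E]; have [h1 h2] := gen lam l1 E.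
  by split; exists lam.
move=> E.
have E' : psum_norm p (x1 + 1 *: x2, y1 + 1 *: y2) = psum_norm p (x1, y1) + psum_norm p (x2, y2).
  by rewrite !scale1r.
have [h1 h2] := gen 1 (normr1 _) E'.
by rewrite /TEA_pair; rewrite !scale1r in h1 h2.
Qed.
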